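(* Let $\rho>0$ be fixed. The class of $\rho$-dense graphs in $\mathbb{R}^d$ has polynomial expansion bounded by $f(r)=\rho\, r^{O(d)}$.
   Context: A set of objects $F$ in $\mathbb{R}^d$ has density $\rho$ if any object $o$ (not necessarily in $F$) intersects at most $\rho$ objects of $F$ with diameter at least that of $o$. A graph is $\rho$-dense (in $\mathbb{R}^d$) if it is the intersection graph of a set of objects in $\mathbb{R}^d$ with density $\rho$. A graph is $r$-shallow if some vertex reaches every vertex by a path with at most $r$ edges; an $r$-shallow minor of $G$ is a minor (edge contractions, edge/vertex deletions) whose clusters induce $r$-shallow subgraphs; $\nabla_r(G)$ is the supremum of $|E(K)|/|V(K)|$ over all $r$-shallow minors $K$ of $G$. A class has expansion bounded by $f$ if $\sup_{G}\nabla_r(G)\le f(r)$ for all $r$. *)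

(* Defs.v *)
From HB Require Import structures.
From mathcomp Require Import all_boot all_order all_algebra.
From mathcomp Require Import boolp classical_sets reals.
Set Implicit Arguments. Unset Strict Implicit. Unset Printing Implicit Defensive.
Import Order.TTheory GRing.Theory Num.Theory.
Local Open Scope classical_set_scope.
Local Open Scope ring_scope.

Section Geometry.
Variables (R : realType) (d : nat).

Definition point := 'I_d -> R.

Definition dist (x y : point) : R := Num.sqrt (\sum_(i < d) (x i - y i) ^+ 2).

(* a (geometric) object: an arbitrary subset of R^d; we require boundedness *)
Definition bounded_obj (A : set point) : Prop :=
  exists M : R, forall x y, A x -> A y -> dist x y <= M.

(* diameter = sup of pairwise distances (0 for the empty set) *)
Definition diam (A : set point) : R :=
  sup [set t | exists x y, A x /\ A y /\ t = dist x y].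

Definition has_density (V : finType) (obj : V -> set point) (rho : R) : Prop :=
  forall o : set point, bounded_obj o ->
    (#|[set v : V | `[< obj v `&` o !=set0 >] && (diam o <= diam (obj v))]|%:R
       <= rho).

Definition rho_dense (V : finType) (e : rel V) (rho : R) : Prop :=
  exists obj : V -> set point,
    (forall v, bounded_obj (obj v)) /\
    has_density obj rho /\
    (forall u v, e u v = (u != v) && `[< obj u `&` obj v !=set0 >]).

End Geometry.

Local Close Scope classical_set_scope.

Section Minors.
Variables (V : finType) (e : rel V).

Definition shallow_cluster (r : nat) (C : {set V}) : Prop :=
  exists2 c, c \in C &
    forall v, v \in C -> exists s : seq V,
      [/\ size s <= r, path (fun x y => e x y && (x \in C) && (y \in C)) c s
        & last c s = v]%N.

Definition shallow_minor (r : nat) (W : finType) (eK : rel W)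
  (cl : W -> {set V}) : Prop :=
  [/\ forall a, shallow_cluster r (cl a),
      forall a b, a != b -> cl a :&: cl b == finset.set0
    & forall a b, a != b -> eK a b ->
        exists x y, [/\ x \in cl a, y \in cl b & e x y]].

Definition edges (W : finType) (eK : rel W) : {set {set W}} :=
  [set E : {set W} | [exists a, exists b,
      [&& a != b, eK a b & E == [set a; b]]]].

(* nabla_r(G) = sup of |E(K)|/|V(K)| over r-shallow minors K (0/0 = 0) *)
Definition nabla (R : realType) (r : nat) : R :=
  sup [set q : R | exists (W : finType) (eK : rel W) (cl : W -> {set V}),
         shallow_minor r eK cl /\ q = #|edges eK|%:R / #|W|%:R]%classic.

End Minors.

(* Main.v *)
From Pilot Require Import Defs.
From mathcomp Require Import all_boot all_order all_algebra.
From mathcomp Require Import boolp classical_sets reals.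
From mathcomp Require Import ring lra zify.
Import Order.TTheory GRing.Theory Num.Theory.
Local Open Scope ring_scope.
Section Part1.
Unset Implicit Arguments.
Local Open Scope ring_scope.

Set Implicit Arguments.
Section Geo.
Variables (R : realType) (d : nat).
Implicit Types (x y z : Pilot.Defs.point R d).

Lemma CS (a b : 'I_d -> R) :
  (\sum_i a i * b i) ^+ 2 <= (\sum_i a i ^+ 2) * (\sum_i b i ^+ 2).
Proof.
have H0 : 0 <= \sum_i \sum_j (a i * b j - a j * b i) ^+ 2.
  by apply: sumr_ge0 => i _; apply: sumr_ge0 => j _; exact: sqr_ge0.
have E1 : (\sum_i a i ^+ 2) * (\sum_i b i ^+ 2) =
          \sum_i \sum_j a i ^+ 2 * b j ^+ 2.
  rewrite big_distrl /=; apply: eq_bigr => i _; by rewrite big_distrr.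
have E2 : (\sum_i a i ^+ 2) * (\sum_i b i ^+ 2) =
          \sum_i \sum_j a j ^+ 2 * b i ^+ 2.
  rewrite mulrC big_distrl /=; apply: eq_bigr => i _; rewrite big_distrr /=.
  by apply: eq_bigr => j _; rewrite mulrC.
have E3 : (\sum_i a i * b i) ^+ 2 = \sum_i \sum_j (a i * b i) * (a j * b j).
  rewrite expr2 big_distrl /=; apply: eq_bigr => i _; by rewrite big_distrr.
have E : \sum_i \sum_j (a i * b j - a j * b i) ^+ 2 =
   (\sum_i \sum_j a i ^+ 2 * b j ^+ 2) + (\sum_i \sum_j a j ^+ 2 * b i ^+ 2)
   - 2 * \sum_i \sum_j (a i * b i) * (a j * b j).
  rewrite -big_split /= big_distrr /= -sumrB; apply: eq_bigr => i _.
  rewrite big_distrr /= -big_split /= -sumrB; apply: eq_bigr => j _; ring.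
rewrite -E1 -E2 -E3 in E; rewrite E in H0; lra.
Qed.

Lemma dist_ge0 x y : 0 <= dist x y.
Proof. exact: sqrtr_ge0. Qed.

Lemma dist_leP x y t : 0 <= t ->
  (dist x y <= t) = (\sum_i (x i - y i) ^+ 2 <= t ^+ 2).
Proof.
move=> t0; rewrite /dist -[in RHS]ler_sqrt ?sqr_ge0 // sqrtr_sqr ger0_norm //.
Qed.

Lemma distC x y : dist x y = dist y x.
Proof. by rewrite /dist; congr Num.sqrt; apply: eq_bigr => i _; ring. Qed.

Lemma distxx x : dist x x = 0.
Proof.
by rewrite /dist (eq_bigr (fun _ => 0)) ?big1 ?sqrtr0 // => i _; rewrite subrr expr0n.
Qed.

Lemma dist_tri x y z : dist x z <= dist x y + dist y z.
Proof.
set A := \sum_i (x i - y i) ^+ 2; set B := \sum_i (y i - z i) ^+ 2.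
have A0 : 0 <= A by apply: sumr_ge0 => i _; exact: sqr_ge0.
have B0 : 0 <= B by apply: sumr_ge0 => i _; exact: sqr_ge0.
have sA := sqr_sqrtr A0; have sB := sqr_sqrtr B0.
have gA := sqrtr_ge0 A; have gB := sqrtr_ge0 B.
rewrite dist_leP; last by apply: addr_ge0; exact: dist_ge0.
have -> : \sum_i (x i - z i) ^+ 2 =
   A + B + 2 * \sum_i (x i - y i) * (y i - z i).
  rewrite /A /B -big_split big_distrr -big_split /=; apply: eq_bigr => i _; ring.
have C := CS (fun i => x i - y i) (fun i => y i - z i).
rewrite -/A -/B /= in C.
set S := \sum_i _ in C *.
have HS : S <= Num.sqrt A * Num.sqrt B.
  have : S ^+ 2 <= (Num.sqrt A * Num.sqrt B) ^+ 2 by rewrite exprMn sA sB.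
  move=> h; have hp : 0 <= Num.sqrt A * Num.sqrt B by exact: mulr_ge0.
  nra.
rewrite /dist -/A -/B; nra.
Qed.

End Geo.

End Part1.

Section Part2.
Unset Implicit Arguments.
Local Open Scope ring_scope.

Set Implicit Arguments.
Section Diam.
Variables (R : realType) (d : nat).
Implicit Types (A : set (Pilot.Defs.point R d)).

Lemma diam_ub A x y : bounded_obj A -> A x -> A y -> dist x y <= diam A.
Proof.
move=> [M HM] Ax Ay; apply: ub_le_sup; last by exists x, y.
by exists M => t [u [v [Au [Av ->]]]]; exact: HM.
Qed.

Lemma diam_le A M : 0 <= M -> (forall x y, A x -> A y -> dist x y <= M) ->
  diam A <= M.
Proof.
move=> M0 HM; rewrite /diam.
set S := (X in sup X).
have [->|/set0P [t St]] := eqVneq S set0; first by rewrite sup0.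
apply: ge_sup; first by exists t.
by move=> u [x [y [Ax [Ay ->]]]]; exact: HM.
Qed.

Lemma diam_ge0 A : bounded_obj A -> 0 <= diam A.
Proof.
move=> bA; have [->|/set0P [x Ax]] := eqVneq A set0.
  rewrite /diam; set S := (X in sup X).
  have -> : S = set0 by apply/seteqP; split => t // [x [y [[]]]].
  by rewrite sup0.
by rewrite -(@distxx R d x); exact: diam_ub.
Qed.

Lemma bounded_of A M : (forall x y, A x -> A y -> dist x y <= M) -> bounded_obj A.
Proof. by move=> H; exists M. Qed.

End Diam.

Lemma path_rev_ex (T : eqType) (rl : rel T) (sym : forall u v, rl u v = rl v u)
  c s : path rl c s -> exists s',
  [/\ path rl (last c s) s', last (last c s) s' = c, size s' = size s
    & forall u, u \in s' -> u \in c :: s].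
Proof.
elim: s c => [|u t IH] c /=.
  by move=> _; exists [::].
move=> /andP[rcu pt]; have [s'' [p1 l1 z1 m1]] := IH u pt.
exists (rcons s'' c); split.
- by rewrite rcons_path p1 l1 sym rcu.
- by rewrite last_rcons.
- by rewrite size_rcons z1.
- move=> w; rewrite mem_rcons inE => /orP[/eqP->|/m1 h]; first by rewrite inE eqxx.
  by rewrite inE h orbT.
Qed.

Lemma path_in (T : eqType) (rl : rel T) (C : pred T) c s :
  path (fun u v => rl u v && C u && C v) c s -> forall u, u \in s -> C u.
Proof.
elim: s c => [|w t IH] c /=; first by move=> _ u; rewrite in_nil.
move=> /andP[H pt] u; have Cw : C w by move: H => /andP[].
by rewrite inE => /orP[/eqP->//|h]; exact: (IH w pt u h).
Qed.

End Part2.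

Section Part3.
Unset Implicit Arguments.

Lemma card_bigcup_le (T I : finType) (P : pred I) (F : I -> {set T}) :
  (#|\bigcup_(i | P i) F i| <= \sum_(i | P i) #|F i|)%N.
Proof.
elim/big_rec2: _ => [|i B n _ IH]; first by rewrite cards0.
apply: leq_trans (leq_card_setU _ _).1 _; exact: leq_add.
Qed.

Local Open Scope classical_set_scope.
Local Open Scope ring_scope.
Set Implicit Arguments.
Definition coverable (R : realType) (d : nat) (q : Pilot.Defs.point R d) (Dm : R)
  (L N : nat) : Prop :=
  exists (I : finType) (J : {set I}) (o : I -> set (Pilot.Defs.point R d)),
  [/\ (#|J| <= N)%N,
      (forall i, i \in J -> forall x y, o i x -> o i y -> dist x y <= Dm)
    & (forall x, dist q x <= L%:R * Dm -> exists2 i, i \in J & o i x)].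

Section Graph.
Variables (R : realType) (d : nat) (V : finType).
Variables (obj : V -> set (Pilot.Defs.point R d)) (rho : R).
Hypothesis rho0 : 0 <= rho.
Hypothesis ob_bd : forall v, bounded_obj (obj v).
Hypothesis hden : has_density obj rho.
Variable e : rel V.
Hypothesis he : forall u v, e u v = (u != v) && `[< (obj u `&` obj v) !=set0 >].

Lemma e_meet u v : e u v -> exists p, obj u p /\ obj v p.
Proof. by rewrite he => /andP[_ /asboolP [p [h1 h2]]]; exists p. Qed.

Lemma e_sym u v : e u v = e v u.
Proof. by rewrite !he eq_sym setIC. Qed.

Let dl v := diam (obj v).

Lemma chain_small (Dm : R) (rl : rel V) (hrl : forall u v, rl u v -> e u v) s y :
  path rl y s -> (forall u, u \in y :: s -> dl u <= Dm) ->
  forall p q, obj y p -> obj (last y s) q -> dist p q <= (size s).+1%:R * Dm.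
Proof.
elim: s y => [|u t IH] y /=.
  move=> _ H p q yp yq; rewrite mul1r.
  apply: le_trans (H y _); first exact: diam_ub.
  by rewrite inE eqxx.
move=> /andP[ryu pt] H p q yp lq.
have [t0 [yt ut]] := e_meet (hrl _ _ ryu).
have h1 : dist p t0 <= Dm.
  apply: le_trans (H y _); first exact: diam_ub.
  by rewrite inE eqxx.
have h2 : dist t0 q <= (size t).+1%:R * Dm.
  have H' : forall w, w \in u :: t -> dl w <= Dm.
    by move=> w hw; apply: H; rewrite inE hw orbT.
  exact: (IH u pt H' t0 q ut lq).
apply: le_trans (dist_tri p t0 q) _.
rewrite -[(size t).+2]addn1 natrD mulrDl mul1r; lra.
Qed.

Lemma chain_big (Dm : R) (Dm0 : 0 <= Dm) (rl : rel V)
  (hrl : forall u v, rl u v -> e u v) s y :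
  path rl y s -> Dm <= dl (last y s) -> forall p, obj y p ->
  exists w, [/\ w \in y :: s, Dm <= dl w &
     exists t, obj w t /\ dist p t <= (size s)%:R * Dm].
Proof.
elim: s y => [|u t IH] y /=.
  move=> _ H p yp; exists y; split => //; first by rewrite inE eqxx.
  by exists p; split => //; rewrite distxx mul0r.
move=> /andP[ryu pt] H p yp.
have [Hy|Hy] := leP Dm (dl y).
  exists y; split => //; first by rewrite inE eqxx.
  exists p; split => //; rewrite distxx; apply: mulr_ge0 => //.
have [t0 [yt ut]] := e_meet (hrl _ _ ryu).
have h1 : dist p t0 <= Dm.
  apply: le_trans (ltW Hy); exact: diam_ub.
have [w [hw1 hw2 [t1 [wt1 dt1]]]] := IH u pt H t0 ut.
exists w; split => //; first by rewrite inE hw1 orbT.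
exists t1; split => //.
apply: le_trans (dist_tri p t0 t1) _.
rewrite -[(size t).+1]addn1 natrD mulrDl mul1r; lra.
Qed.

Lemma path_obj_ne (rl : rel V) (hrl : forall u v, rl u v -> e u v) s y :
  path rl y s -> forall q, obj (last y s) q -> exists p, obj y p.
Proof.
case: s => [|u t] /=; first by move=> _ q h; exists q.
move=> /andP[ryu _] _ _; have [t0 [yt _]] := e_meet (hrl _ _ ryu); by exists t0.
Qed.

Variables (r N : nat).
Hypothesis hcov : forall (q : Pilot.Defs.point R d) (Dm : R), 0 <= Dm -> coverable q Dm (3 * r + 1) N.
Variables (W : finType) (eK : rel W) (cl : W -> {set V}).
Hypothesis hK : shallow_minor e r eK cl.

Let ecl (C : {set V}) := fun u v => e u v && (u \in C) && (v \in C).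

Lemma ecl_e C u v : ecl C u v -> e u v.
Proof. by rewrite /ecl => /andP[/andP[]]. Qed.

Lemma ecl_sym C u v : ecl C u v = ecl C v u.
Proof. by rewrite /ecl e_sym; case: (u \in C); case: (v \in C); rewrite ?andbF ?andbT. Qed.

Theorem edges_bound : (#|edges eK|%:R <= #|W|%:R * (N%:R * rho)).
Proof.
case: hK => hcl hdisj hedge.
have Hc : forall a, exists c, c \in cl a /\ forall v, v \in cl a ->
   exists s : seq V, [/\ (size s <= r)%N, path (ecl (cl a)) c s & last c s = v].
  move=> a; have [c hc1 hc2] := hcl a; by exists c; split.
have [cen hcen] := choice Hc.
have Hz : forall a, exists z, z \in cl a /\
     forall x, x \in cl a -> dl x <= dl z.
  move=> a.
  have ca := (hcen a).1.
  case: (@real_arg_maxP R _ (cen a) (fun x => x \in cl a) dl ca _) => [x _|z za zmax].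
    exact: num_real.
  by exists z; split => // x xa; exact: zmax.
have [zm hzm] := choice Hz.
pose D a := dl (zm a).
have Hq : forall a, exists q : Pilot.Defs.point R d,
     (exists p, obj (cen a) p) -> obj (cen a) q.
  move=> a; case: (pselect (exists p, obj (cen a) p)) => [[p hp]|hn].
    by exists p.
  by exists (fun _ => 0) => h; exfalso; exact: hn h.
have [qa hqa] := choice Hq.
pose Nb a := [set b | [&& b != a, eK a b || eK b a & D a <= D b]]%SET.
have inA : forall a u s, path (ecl (cl a)) (cen a) s -> u \in cen a :: s -> u \in cl a.
  move=> a u s ps; rewrite inE => /orP[/eqP->|]; first exact: (hcen a).1.
  exact: (@path_in _ e (fun u => u \in cl a) _ _ ps).
have hNb : forall a, #|Nb a|%:R <= N%:R * rho.
  move=> a.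
  have Da0 : 0 <= D a by apply: diam_ge0.
  have [I [J [o [cJ oJ covJ]]]] := hcov (qa a) (D a) Da0.
  pose Sf j := [set v : V | `[< obj v `&` o j !=set0 >] && (diam (o j) <= dl v)]%SET.
  have hS : forall j, j \in J -> #|Sf j|%:R <= rho.
    move=> j jJ; have := hden (@bounded_of _ _ (o j) (D a) (oJ j jJ)).
    suff -> : #|Sf j| = #|[set v : V | `[< obj v `&` o j !=set0 >] &&
        (diam (o j) <= diam (obj v))]| by [].
    apply: eq_card => v; rewrite inE; apply/idP/idP => h.
      by apply/mem_set.
    by move: h => /set_mem.
  pose U := (\bigcup_(j in J) Sf j)%SET.
  have key : forall b, b \in Nb a -> exists2 w, w \in cl b & w \in U.
    move=> b; rewrite inE => /and3P[hba hab hD].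
    have [x [y [xa yb exy]]] : exists x y, [/\ x \in cl a, y \in cl b & e x y].
      case/orP: hab => h.
        by apply: hedge => //; rewrite eq_sym.
      have [y [x [yb xa eyx]]] := hedge b a hba h.
      by exists x, y; split => //; rewrite e_sym.
    have [p [xp yp]] := e_meet exy.
    have [sa [sza pa la]] := (hcen a).2 x xa.
    have qaP : obj (cen a) (qa a).
      apply: hqa; apply: (@path_obj_ne (ecl (cl a)) (@ecl_e (cl a)) sa (cen a) pa p); by rewrite la.
    have da : dist (qa a) p <= (r.+1)%:R * D a.
      have H1 : forall u, u \in cen a :: sa -> dl u <= D a.
        by move=> u hu; apply: (hzm a).2; exact: inA hu.
      have := @chain_small (D a) (ecl (cl a)) (@ecl_e (cl a)) sa (cen a) pa H1 (qa a) p qaP; rewrite la => /(_ xp) h.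
      apply: le_trans h _; apply: ler_wpM2r => //; by rewrite ler_nat ltnS.
    have [s1 [sz1 p1 l1]] := (hcen b).2 y yb.
    have [s2 [sz2 p2 l2]] := (hcen b).2 (zm b) (hzm b).1.
    have [s1' [p1' l1' sz1' m1']] := @path_rev_ex _ (ecl (cl b)) (@ecl_sym (cl b)) (cen b) s1 p1.
    rewrite l1 in p1' l1'.
    have ps : path (ecl (cl b)) y (s1' ++ s2) by rewrite cat_path p1' l1' p2.
    have ls : last y (s1' ++ s2) = zm b by rewrite last_cat l1' l2.
    have hDl : D a <= dl (last y (s1' ++ s2)) by rewrite ls.
    have [w [hw1 hw2 [t [wt dt]]]] := @chain_big (D a) Da0 (ecl (cl b)) (@ecl_e (cl b)) (s1' ++ s2) y ps hDl p yp.
    exists w.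
      move: hw1; rewrite inE => /orP[/eqP->//|]; rewrite mem_cat => /orP[/m1' h|h].
        exact: inA p1 h.
      by apply: inA p2 _; rewrite inE h orbT.
    have dqt : dist (qa a) t <= (3 * r + 1)%:R * D a.
      apply: le_trans (dist_tri (qa a) p t) _.
      have : (size (s1' ++ s2))%:R * D a <= (2 * r)%:R * D a.
        apply: ler_wpM2r => //; rewrite ler_nat size_cat sz1'.
        by rewrite mul2n -addnn leq_add.
      have -> : (3 * r + 1)%:R * D a = (r.+1)%:R * D a + (2 * r)%:R * D a.
        by rewrite -mulrDl -natrD mulSn addn1 addSn.
      move=> h; lra.
    have [j jJ ojt] := covJ t dqt.
    apply/finset.bigcupP; exists j => //; rewrite inE; apply/andP; split.
      by apply/asboolP; exists t.
    apply: le_trans hw2; apply: diam_le Da0 _; exact: oJ.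
  have Hw : forall b, exists w, b \in Nb a -> w \in cl b /\ w \in U.
    move=> b; case: (boolP (b \in Nb a)) => hb.
      by have [w w1 w2] := key b hb; exists w.
    by exists (cen b).
  have [wf hwf] := choice Hw.
  have inj : {in Nb a &, injective wf}.
    move=> b1 b2 h1 h2 heq; apply/eqP; apply/negPn/negP => hne.
    have := hdisj _ _ hne; move/eqP/setP/(_ (wf b1)).
    by rewrite inE (hwf _ h1).1 heq (hwf _ h2).1 inE.
  have c1 : (#|Nb a| <= #|U|)%N.
    rewrite -(card_in_imset inj); apply: subset_leq_card; apply/fintype.subsetP => v.
    by case/finset.imsetP => b hb ->; exact: (hwf b hb).2.
  have c2 : (#|U| <= \sum_(j in J) #|Sf j|)%N by exact: card_bigcup_le.
  apply: (@le_trans _ _ (\sum_(j in J) (#|Sf j|%:R : R))).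
    by rewrite -natr_sum ler_nat (leq_trans c1 c2).
  apply: (@le_trans _ _ (\sum_(j in J) rho)); first by apply: ler_sum => j jJ; exact: hS.
  rewrite sumr_const -[rho *+ _]mulr_natl; apply: ler_wpM2r => //; by rewrite ler_nat.
have hE : (#|edges eK| <= \sum_a #|Nb a|)%N.
  apply: (@leq_trans #|(\bigcup_(a in W) [set [set a; b] | b in Nb a])%SET|).
    apply: subset_leq_card; apply/fintype.subsetP => E; rewrite inE.
    case/existsP => a /existsP[b /and3P[hab hK' /eqP->]].
    apply/finset.bigcupP; case: (leP (D a) (D b)) => hD.
      exists a => //; apply/finset.imsetP; exists b => //; by rewrite inE eq_sym hab hK' hD.
    exists b => //; apply/finset.imsetP; exists a.
      by rewrite inE hab hK' orbT (ltW hD).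
    by apply/setP => z; rewrite !inE orbC.
  apply: leq_trans (card_bigcup_le _ _ _ _) _.
  apply: leq_sum => a _; exact: leq_imset_card.
apply: (@le_trans _ _ (\sum_a (#|Nb a|%:R : R))).
  by rewrite -natr_sum ler_nat.
apply: le_trans (ler_sum _ (fun a _ => hNb a)) _.
by rewrite sumr_const -[_ *+ #|_|]mulr_natl.
Qed.

End Graph.

End Part3.

Section Part4.
Unset Implicit Arguments.
Local Open Scope ring_scope.

Section Count.
Variable R : realType.

Lemma fbound (a t k : R) : 0 < a -> a <= t ^+ 2 -> 1 <= t -> 0 <= k ->
  a / (a + k ^+ 2) <= 4 * t ^+ 2 / (k + t) - 4 * t ^+ 2 / (k + t + 1).
Proof.
move=> a0 at2 t1 k0.
have hkt : 0 < k + t by lra.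
have hkt1 : 0 < k + t + 1 by lra.
have h1 : 4 * t ^+ 2 / (k + t) - 4 * t ^+ 2 / (k + t + 1) =
          4 * t ^+ 2 / ((k + t) * (k + t + 1)).
  by field; rewrite (lt0r_neq0 hkt) (lt0r_neq0 hkt1).
rewrite h1 ler_pdivrMr; last by have := sqr_ge0 k; lra.
rewrite mulrAC ler_pdivlMr; last by apply: mulr_gt0; lra.
have hp : (k + t) * (k + t + 1) <= 4 * (k ^+ 2 + t ^+ 2).
  have := sqr_ge0 (k - t); have := sqr_ge0 (4 * k - 1).
  have : 0 <= t * (t - 1) by apply: mulr_ge0; lra.
  have : 0 <= (t - 1) * (t + 1) by apply: mulr_ge0; lra.
  nra.
have : a * ((k + t) * (k + t + 1)) <= a * (4 * (k ^+ 2 + t ^+ 2)).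
  by apply: ler_wpM2l => //; lra.
have : a * k ^+ 2 <= t ^+ 2 * k ^+ 2 by apply: ler_wpM2r => //; exact: sqr_ge0.
move=> h2 h3; nra.
Qed.

Lemma sum_f_le (A T n : nat) : (0 < A)%N -> (A <= T * T)%N -> (0 < T)%N ->
  \sum_(k < n) (A%:R / (A%:R + (k%:R) ^+ 2) : R) <= 4 * T%:R.
Proof.
move=> A0 AT T0.
have a0 : (0 : R) < A%:R by rewrite ltr0n.
have at2 : (A%:R : R) <= T%:R ^+ 2 by rewrite -natrX ler_nat -mulnn.
have t1 : (1 : R) <= T%:R by rewrite ler1n.
pose u k : R := - (4 * T%:R ^+ 2 / (k%:R + T%:R)).
apply: (@le_trans _ _ (\sum_(k < n) (u k.+1 - u k))).
  apply: ler_sum => k _.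
  have e1 : (k.+1%:R : R) + T%:R = k%:R + T%:R + 1 by rewrite -natr1 addrAC.
  apply: le_trans (@fbound A%:R T%:R k%:R a0 at2 t1 (ler0n _ _)) _.
  rewrite /u e1; lra.
rewrite -(big_mkord xpredT (fun k => u k.+1 - u k)) telescope_sumr // /u.
rewrite add0r opprK.
have -> : 4 * T%:R ^+ 2 / T%:R = 4 * T%:R :> R.
  by field; rewrite pnatr_eq0 -lt0n.
have : 0 <= 4 * T%:R ^+ 2 / (n%:R + T%:R) :> R.
  apply: divr_ge0; [apply: mulr_ge0 => //; exact: sqr_ge0 | apply: addr_ge0; [exact: ler0n | lra]].
lra.
Qed.


Lemma prod_le_2 (d A : nat) (z : 'I_d -> nat) : (0 < A)%N ->
  (\sum_i (z i) ^ 2 <= d * A)%N ->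
  \prod_i (1 + (z i)%:R ^+ 2 / A%:R : R) <= 2 ^+ d.
Proof.
move=> A0 hz.
have a0 : (0 : R) < A%:R by rewrite ltr0n.
case: d z hz => [|d] z hz; first by rewrite big_ord0 expr0.
have g0 : {in predT, forall i, (0 : R) <= 1 + (z i)%:R ^+ 2 / A%:R}.
  move=> i _; apply: addr_ge0 => //; apply: divr_ge0; [exact: sqr_ge0 | exact: ltW].
have := (leif_AGM g0).1; rewrite card_ord => h; apply: le_trans h _.
apply: lerXn2r; rewrite ?nnegrE.
- apply: divr_ge0 => //; apply: sumr_ge0 => i _; exact: g0.
- by [].
rewrite ler_pdivrMr ?ltr0n //.
rewrite big_split /= sumr_const card_ord -mulr_suml.
have : (\sum_(i < d.+1) (z i)%:R ^+ 2 : R) <= (d.+1 * A)%:R.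
  rewrite (eq_bigr (fun i => ((z i) ^ 2)%:R)); last by move=> i _; rewrite natrX.
  by rewrite -natr_sum ler_nat.
rewrite natrM => h.
have : (\sum_(i < d.+1) (z i)%:R ^+ 2 : R) / A%:R <= d.+1%:R.
  by rewrite ler_pdivrMr.
rewrite -[1 *+ _]mulr_natl mulr1 => h2; lra.
Qed.

Lemma count_ball (d A T B : nat) : (0 < A)%N -> (A <= T * T)%N -> (0 < T)%N ->
  (#|[set z : {ffun 'I_d -> 'I_B.+1} | (\sum_i (z i : nat) ^ 2 <= d * A)%N]|
     <= (8 * T) ^ d)%N.
Proof.
move=> A0 AT T0.
rewrite -(ler_nat R).
set Jz := [set z | _].
pose f (k : nat) : R := A%:R / (A%:R + k%:R ^+ 2).
have a0 : (0 : R) < A%:R by rewrite ltr0n.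
have f0 : forall k, 0 <= f k.
  move=> k; apply: divr_ge0; first exact: ltW.
  by apply: addr_ge0; [exact: ltW | exact: sqr_ge0].
have key : forall z, z \in Jz -> 1 <= 2 ^+ d * \prod_i f (z i).
  move=> z; rewrite inE => hz.
  have := @prod_le_2 d A (fun i => (z i : nat)) A0 hz.
  have -> : \prod_i f (z i) = (\prod_i (1 + (z i)%:R ^+ 2 / A%:R))^-1.
    rewrite -prodfV; apply: eq_bigr => i _; rewrite /f.
    have hk : (0 : R) < A%:R + (z i)%:R ^+ 2.
      by have := sqr_ge0 ((z i)%:R : R); lra.
    by field; rewrite (lt0r_neq0 a0) (lt0r_neq0 hk).
  move=> h; rewrite ler_pdivlMr ?mul1r //; apply: prodr_gt0 => i _.
  by have := divr_ge0 (sqr_ge0 ((z i)%:R : R)) (ltW a0); lra.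
have g0 : forall (z : {ffun 'I_d -> 'I_B.+1}), 0 <= 2 ^+ d * \prod_i f (z i).
  move=> z; apply: mulr_ge0; first exact: exprn_ge0.
  by apply: prodr_ge0 => i _.
have step1 : #|Jz|%:R <= \sum_(z in Jz) (2 ^+ d * \prod_i f (z i)).
  rewrite -sum1_card natr_sum; apply: ler_sum => z hz; exact: key.
have step2 : \sum_(z in Jz) (2 ^+ d * \prod_i f (z i)) <=
             \sum_(z : {ffun 'I_d -> 'I_B.+1}) (2 ^+ d * \prod_i f (z i)).
  rewrite [X in _ <= X](bigID (mem Jz)) /= lerDl.
  by apply: sumr_ge0 => z _.
have step3 : \sum_(z : {ffun 'I_d -> 'I_B.+1}) (2 ^+ d * \prod_i f (z i)) =
             2 ^+ d * (\sum_(k : 'I_B.+1) f k) ^+ d.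
  rewrite -big_distrr /=; congr (_ * _).
  rewrite -(bigA_distr_bigA (fun (i : 'I_d) (k : 'I_B.+1) => f k)) /=.
  by rewrite prodr_const card_ord.
have step4 : (\sum_(k : 'I_B.+1) f k) ^+ d <= (4 * T%:R) ^+ d.
  apply: lerXn2r; rewrite ?nnegrE.
  - by apply: sumr_ge0 => k _.
  - by apply: mulr_ge0 => //; exact: ler0n.
  exact: sum_f_le.
have step5 : 2 ^+ d * (4 * T%:R) ^+ d = ((8 * T) ^ d)%:R :> R.
  by rewrite -exprMn natrX; congr (_ ^+ _); rewrite natrM; ring.
rewrite -step5; apply: le_trans step1 _; apply: le_trans step2 _.
rewrite step3; apply: ler_wpM2l => //; exact: exprn_ge0.
Qed.
End Count.

End Part4.

Section Part5.
Unset Implicit Arguments.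
Local Open Scope classical_set_scope.
Local Open Scope ring_scope.

Lemma sqrt_ex (n : nat) : exists k, (k * k <= n < k.+1 * k.+1)%N.
Proof.
elim: n => [|n [k /andP[h1 h2]]]; first by exists 0%N.
case: (ltnP n.+1 (k.+1 * k.+1)) => h.
  by exists k; rewrite h andbT; lia.
exists k.+1; apply/andP; split; first by [].
by nia.
Qed.

Lemma term_le (R : realType) (I : finType) (F : I -> R) i :
  (forall j, 0 <= F j) -> F i <= \sum_j F j.
Proof.
move=> F0; rewrite (bigD1 i) //= lerDl; by apply: sumr_ge0 => j _.
Qed.

Section Cover.
Variables (R : realType) (d : nat).

Lemma cover_single (q : Pilot.Defs.point R d) (Dm : R) (L N : nat) :
  0 <= Dm -> (0 < N)%N -> (Dm = 0 \/ d = 0%N) -> coverable q Dm L N.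
Proof.
move=> Dm0 N0 hc.
exists unit, [set: unit]%SET, (fun _ => fun x => dist q x <= L%:R * Dm).
split.
- by rewrite cardsT card_unit.
- move=> i _ x y hx hy; case: hc => [Dz|d0].
    rewrite Dz mulr0 in hx hy *.
    apply: le_trans (dist_tri x q y) _; rewrite distC.
    by have := dist_ge0 q x; have := dist_ge0 q y; lra.
  move: x y {hx hy}; rewrite d0 => x y.
  by rewrite /dist big_ord0 sqrtr0.
- by move=> x hx; exists tt => //; rewrite inE.
Qed.


Lemma cover_main (q : Pilot.Defs.point R d) (Dm : R) (L : nat) :
  0 < Dm -> (0 < d)%N -> coverable q Dm L ((16 * (3 * L + 2)) ^ d).
Proof.
move=> Dpos dpos.
have [k /andP[hk1 hk2]] := sqrt_ex d.
set m := k.+1.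
have m0 : (0 < m)%N by [].
have dm : (d <= m * m)%N by apply: ltnW.
have m4 : (m * m <= 4 * d)%N by rewrite /m; nia.
have mR : (0 : R) < m%:R by rewrite ltr0n.
have [s s0 sm] : exists2 s : R, 0 < s & Dm = s * m%:R.
  by exists (Dm / m%:R); [apply: divr_gt0 | rewrite divfK // lt0r_neq0].
set B := (L * m + 1)%N.
set A := (8 * L * L + 2)%N.
set T := (3 * L + 2)%N.
pose I := ({ffun 'I_d -> bool} * {ffun 'I_d -> 'I_B.+1})%type.
pose Jz := [set z : {ffun 'I_d -> 'I_B.+1} | (\sum_i (z i : nat) ^ 2 <= d * A)%N]%SET.
pose J := finset.setX [set: {ffun 'I_d -> bool}]%SET Jz.
pose zi (p : I) (i : 'I_d) : int :=
  if p.1 i then - ((p.2 i : nat)%:Z) else (p.2 i : nat)%:Z.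
pose o (p : I) : set (Pilot.Defs.point R d) := fun x =>
  dist q x <= L%:R * Dm /\ forall i, Num.floor ((x i - q i) / s) = zi p i.
exists I, J, o; split.
- rewrite cardsX cardsT card_ffun card_bool card_ord.
  have : (#|Jz| <= (8 * T) ^ d)%N.
    apply: (@count_ball R); rewrite /A /T; nia.
  move=> h; have -> : (16 * (3 * L + 2) = 2 * (8 * T))%N by rewrite /T; lia.
  by rewrite expnMn; apply: leq_mul.
- move=> p _ x y [_ hx] [_ hy].
  have Dm0 : 0 <= Dm by exact: ltW.
  rewrite dist_leP //.
  have hi : forall i, (x i - y i) ^+ 2 <= s ^+ 2.
    move=> i; set a := (x i - q i) / s; set b := (y i - q i) / s.
    have ea : x i - y i = s * (a - b) by rewrite /a /b; field; exact: lt0r_neq0.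
    have ha := floor_itv a; have hb := floor_itv b.
    rewrite hx -(hy i) in ha.
    move: ha hb; rewrite intrD /= => /andP[ha1 ha2] /andP[hb1 hb2].
    rewrite ea exprMn.
    have : (a - b) ^+ 2 <= 1 by nra.
    move=> h; rewrite -[leRHS]mulr1; apply: ler_wpM2l => //; exact: sqr_ge0.
  apply: le_trans (ler_sum _ (fun i _ => hi i)) _.
  rewrite sumr_const card_ord -mulr_natr.
  have e : Dm ^+ 2 = s ^+ 2 * (m * m)%:R by rewrite sm natrM; ring.
  rewrite e; apply: ler_wpM2l; [exact: sqr_ge0 | by rewrite ler_nat].
- move=> x hx.
  have Dm0 : 0 <= Dm by exact: ltW.
  pose u i := (x i - q i) / s.
  have hsum : \sum_i u i ^+ 2 <= (L * m)%:R ^+ 2.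
    have := hx; rewrite distC dist_leP; last by apply: mulr_ge0 => //; exact: ler0n.
    move=> h.
    have -> : \sum_i u i ^+ 2 = (\sum_i (x i - q i) ^+ 2) / s ^+ 2.
      by rewrite mulr_suml; apply: eq_bigr => i _; rewrite /u expr_div_n.
    rewrite ler_pdivrMr ?exprn_gt0 //; apply: le_trans h _.
    have -> : (L%:R * Dm) ^+ 2 = (L * m)%:R ^+ 2 * s ^+ 2 by rewrite sm natrM; ring.
    by [].
  have hu : forall i, `|u i| <= (L * m)%:R.
    move=> i.
    have h1 : u i ^+ 2 <= (L * m)%:R ^+ 2.
      apply: le_trans hsum.
      exact: (@term_le R _ (fun j => u j ^+ 2) i (fun j => sqr_ge0 _)).
    have := real_normK (num_real (u i)); have := normr_ge0 (u i).
    have := ler0n R (L * m); nra.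
  pose kf i := Num.floor (u i).
  have hk : forall i, `|(kf i)%:~R| <= `|u i| + 1 :> R.
    move=> i; have := floor_itv (u i); rewrite intrD /= => /andP[h1 h2].
    rewrite ler_norml; have := ler_norm (u i); have := ler_norm (- u i).
    rewrite normrN => ha hb; apply/andP; split; rewrite /kf; lra.
  have hkB : forall i, (`|kf i| < B.+1)%N.
    move=> i; rewrite ltnS -(ler_nat R) natr_absz intr_norm.
    apply: le_trans (hk i) _; rewrite /B natrD; have := hu i; lra.
  pose p : I := ([ffun i => kf i < 0], [ffun i => inord `|kf i|]).
  exists p.
    rewrite inE /=; apply/andP; split; first by rewrite inE.
    rewrite inE -(ler_nat R) natr_sum.
    have e2 : forall i, ((p.2 i : nat) ^ 2)%:R = `|(kf i)%:~R| ^+ 2 :> R.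
      by move=> i; rewrite /p /= ffunE inordK ?hkB // natrX natr_absz intr_norm.
    rewrite (eq_bigr _ (fun i _ => e2 i)).
    apply: (@le_trans _ _ (\sum_i (2 * u i ^+ 2 + 2))).
      apply: ler_sum => i _.
      have h := ler_pM (normr_ge0 _) (normr_ge0 _) (hk i) (hk i).
      have := real_normK (num_real (u i)); have := sqr_ge0 (`|u i| - 1).
      rewrite !expr2 in h *; nra.
    rewrite big_split /= -mulr_sumr sumr_const card_ord.
    have hn : (2 * (L * m) ^ 2 + 2 * d <= d * A)%N by rewrite /A; nia.
    move: hn; rewrite -(ler_nat R) natrD !natrM => hn.
    have : (2 * \sum_i u i ^+ 2 : R) <= 2 * (L * m)%:R ^+ 2.
      by apply: ler_wpM2l.
    rewrite natrM expr2 -[2 *+ d]mulr_natl => h2; lra.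
  split => // i; rewrite /zi /p /= !ffunE inordK ?hkB //.
  case: ifP => hneg.
    by rewrite abszE ltr0_norm // opprK.
  by rewrite abszE ger0_norm // leNgt hneg.
Qed.

End Cover.

End Part5.

Section Final.
Local Open Scope classical_set_scope.
Local Open Scope ring_scope.

Lemma cover_all (R : realType) (d : nat) (q : Pilot.Defs.point R d) (Dm : R) (L : nat) :
  0 <= Dm -> coverable q Dm L ((16 * (3 * L + 2)) ^ d).
Proof.
move=> Dm0.
have N0 : (0 < (16 * (3 * L + 2)) ^ d)%N by rewrite expn_gt0; apply/orP; left; lia.
have [d0|dpos] := posnP d.
  exact: (@cover_single R d q Dm L _ Dm0 N0 (or_intror d0)).
have [Dz|Dpos] := eqVneq Dm 0.
  exact: (@cover_single R d q Dm L _ Dm0 N0 (or_introl Dz)).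
by apply: (@cover_main R d q Dm L) => //; rewrite lt0r Dpos Dm0.
Qed.

End Final.

Theorem mainTheorem10 :
  exists c : nat,
    forall (R : realType) (d : nat) (rho : R), 0 < rho ->
    forall (V : finType) (e : rel V), rho_dense d e rho ->
    forall r : nat,
      nabla e R r <= rho * ((c * r.+1) ^ (c * d))%:R.
Proof.
exists 144%N => R d rho rho0 V e [obj [bd [dens he]]] r.
set N := ((16 * (3 * (3 * r + 1) + 2)) ^ d)%N.
have hcov : forall (q : Pilot.Defs.point R d) (Dm : R), 0 <= Dm ->
    coverable q Dm (3 * r + 1) N.
  by move=> q Dm Dm0; exact: cover_all.
have hN : (N <= (144 * r.+1) ^ (144 * d))%N.
  apply: (@leq_trans ((144 * r.+1) ^ d)).
    rewrite /N; case: (posnP d) => [->|dp]; first by [].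
    by rewrite leq_exp2r //; lia.
  by apply: leq_pexp2l; [rewrite muln_gt0 | rewrite leq_pmull].
have bnd : N%:R * rho <= rho * ((144 * r.+1) ^ (144 * d))%:R.
  by rewrite mulrC; apply: ler_wpM2l; [exact: ltW | rewrite ler_nat].
apply: le_trans bnd.
have Nr0 : 0 <= N%:R * rho by apply: mulr_ge0; [exact: ler0n | exact: ltW].
apply: ge_sup.
  exists 0; exists void, (fun _ _ => false), (fun _ => finset.set0); split.
    by split; case.
  by rewrite card_void invr0 mulr0.
move=> x [W [eK [cl [hK ->]]]].
have hE := edges_bound (ltW rho0) bd dens he hcov hK.
have [W0|Wpos] := posnP #|W|.
  by rewrite W0 invr0 mulr0.
rewrite ler_pdivrMr ?ltr0n // mulrC; exact: hE.
Qed.
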